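(* Let $X$ be a Hausdorff compactum, $G$ an abelian group, and $n\in\mathcal H_{X,G}$. Then there exist closed sets $F\subset K\subset X$ such that $K$ is an $(n-1)$-homology membrane spanned on $F$ for some nontrivial element of $H_{n-1}(F;G)$.
   Context: $H_k(\cdot;G)$ is reduced Čech homology; $i^k_{A,K}$ denotes the inclusion-induced homomorphism. $\mathcal H_{X,G}$ is the set of integers $k\ge1$ such that there exist a closed $F\subset X$ and a nontrivial $\gamma\in H_{k-1}(F;G)$ with $i^{k-1}_{F,X}(\gamma)=0$. For closed $B\subset K$, $K$ is an $(n-1)$-homology membrane spanned on $B$ for $\gamma\in H_{n-1}(B;G)$ if $i^{n-1}_{B,K}(\gamma)=0$ but $i^{n-1}_{B,K'}(\gamma)\ne0$ for every proper closed subset $K'\subsetneq K$ containing $B$. *)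

(* Defs.v *)
From HB Require Import structures.
From mathcomp Require Import all_boot all_order all_algebra.
From mathcomp Require Import boolp classical_sets topology.
Set Implicit Arguments. Unset Strict Implicit. Unset Printing Implicit Defensive.
Import Order.TTheory GRing.Theory.
Local Open Scope classical_set_scope.
Local Open Scope ring_scope.

(* Reduced Čech homology H_d(A;G) of a subset A of a topological space X.   *)
(* Covers of A are finite families O : 'I_m -> set X of open sets of X      *)
(* covering A; their traces O i ∩ A are exactly the (finite) open covers of *)
(* A in the subspace topology, and finite covers are cofinal since all sets *)
(* considered are compact.  The nerve N_A(O) has as simplices the vertex     *)
(* sequences whose sets have a common point in A.  We use the ordered chain *)
(* complex (d-chains = G-valued functions on (d+1)-tuples of vertices        *)
(* supported on the nerve), augmented in degree 0 (reduced homology).        *)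
(* An element of the inverse limit lim_O H_d(N_A(O);G) is represented by a  *)
(* family of reduced cycles gamma_O, one for each cover O, which is         *)
(* compatible up to boundaries along every refinement projection.           *)

Section Cech.
Variables (X : topologicalType) (G : zmodType).

Definition chain (m d : nat) := {ffun d.+1.-tuple 'I_m -> G}.

Definition nerve (A : set X) m (O : 'I_m -> set X) (s : seq 'I_m) : Prop :=
  (A `&` \bigcap_(i in [set i | i \in s]) O i) !=set0.

Definition supported (A : set X) m (O : 'I_m -> set X) d (c : chain m d) : Prop :=
  forall s : d.+1.-tuple 'I_m, ~ nerve A O (val s) -> c s = 0.

Definition is_cover (A : set X) m (O : 'I_m -> set X) : Prop :=
  (forall i, open (O i)) /\ A `<=` \bigcup_i O i.

Definition refines (A : set X) m' (V : 'I_m' -> set X) m (O : 'I_m -> set X)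
  (p : 'I_m' -> 'I_m) : Prop :=
  forall j, V j `&` A `<=` O (p j).

(* ordered simplicial boundary: d (v_0..v_{d+1}) = sum_j (-1)^j (.. v_j omitted ..) *)
Definition bd m d (c : chain m d.+1) : chain m d :=
  [ffun t : d.+1.-tuple 'I_m =>
     \sum_(s : d.+2.-tuple 'I_m) \sum_(j < d.+2)
        (if take j (val s) ++ drop j.+1 (val s) == val t
         then (if odd j then - c s else c s) else 0)].

Definition aug m (c : chain m 0) : G := \sum_s c s.

Definition is_rcycle m d : chain m d -> Prop :=
  match d with
  | 0 => fun c => aug c = 0
  | d'.+1 => fun c => bd c = 0
  end.

Definition is_bdry (A : set X) m (O : 'I_m -> set X) d (c : chain m d) : Prop :=
  exists b : chain m d.+1, supported A O b /\ bd b = c.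

Definition push m' m (p : 'I_m' -> 'I_m) d (c : chain m' d) : chain m d :=
  [ffun t : d.+1.-tuple 'I_m => \sum_(s | map p (val s) == val t) c s].

Definition cech_fam (d : nat) := forall m : nat, ('I_m -> set X) -> chain m d.

Definition cech_elt (A : set X) d (gamma : cech_fam d) : Prop :=
  (forall m (O : 'I_m -> set X), is_cover A O ->
      supported A O (gamma m O) /\ is_rcycle (gamma m O)) /\
  (forall m (O : 'I_m -> set X) m' (V : 'I_m' -> set X) (p : 'I_m' -> 'I_m),
      is_cover A O -> is_cover A V -> refines A V O p ->
      is_bdry A O (push p (gamma m' V) - gamma m O)).

Definition cech_zero (A : set X) d (gamma : cech_fam d) : Prop :=
  forall m (O : 'I_m -> set X), is_cover A O -> is_bdry A O (gamma m O).

(* For B ⊆ K, the inclusion-induced map i^d_{B,K} sends the class of gamma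
   to the class whose component at a cover O of K (which is also a cover of B,
   with N_B(O) a subcomplex of N_K(O)) is gamma_O itself.  Hence
   i^d_{B,K}(gamma) = 0  iff  cech_zero K gamma. *)
Definition incl_zero (B K : set X) d (gamma : cech_fam d) : Prop :=
  B `<=` K /\ cech_zero K gamma.

Definition in_H (k : nat) : Prop :=
  (1 <= k)%N /\
  exists (F : set X) (gamma : cech_fam k.-1),
    closed F /\ cech_elt F gamma /\ ~ cech_zero F gamma /\
    incl_zero F [set: X] gamma.

Definition homology_membrane (n : nat) (B K : set X) (gamma : cech_fam n.-1)
  : Prop :=
  closed B /\ closed K /\ B `<=` K /\
  incl_zero B K gamma /\
  (forall K' : set X, closed K' -> B `<=` K' -> K' `<=` K -> K' <> K ->
     ~ incl_zero B K' gamma).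

End Cech.

(* Main.v *)
Require Import Defs.
From HB Require Import structures.
From mathcomp Require Import all_boot all_order all_algebra.
From mathcomp Require Import boolp classical_sets cardinality topology.
Import GRing.Theory.
Local Open Scope classical_set_scope.
Local Open Scope ring_scope.
Lemma dir_cover (X : topologicalType) (Fam : set (set X)) (W : set X) :
  compact [set: X] -> Fam !=set0 ->
  (forall U1 U2, Fam U1 -> Fam U2 -> exists2 U3, Fam U3 & U1 `|` U2 `<=` U3) ->
  (forall U, Fam U -> open U) -> open W ->
  ~` (\bigcup_(U in Fam) U) `<=` W -> exists2 U, Fam U & ~` U `<=` W.
Proof.
move=> cpt [U0 FU0] tot op oW sub.
apply: contrapT => H.
have ne : forall U, Fam U -> (~` U `&` ~` W) !=set0.
  move=> U FU; apply/set0P/negP => /eqP E; apply: H; exists U => //.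
  move=> x nUx; apply: contrapT => nWx.
  have : (~` U `&` ~` W) x by [].
  by rewrite E.
pose B (U : set X) := ~` U `&` ~` W.
have FF : Filter (filter_from Fam B).
  apply: filter_from_filter; first by exists U0.
  move=> i j Fi Fj; have [k Fk sk] := tot i j Fi Fj.
  exists k => // x [nk nW]; split; split => // => ?; apply: nk; apply: sk;
    by [left|right].
have PF : ProperFilter (filter_from Fam B).
  by apply: filter_from_proper => U FU; apply: ne.
have [p [_ clp]] := cpt _ PF filterT.
rewrite clusterE in clp.
have pB : forall U, Fam U -> B U p.
  move=> U FU.
  have cB : closed (B U).
    by apply: closedI; apply: open_closedC => //; apply: op.
  have -> : B U = closure (B U) by apply/closure_id.
  by apply: clp; exists U.
have [U1 FU1] := (ex_intro _ U0 FU0).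
have nWp := (pB U1 FU1).2.
apply: nWp; apply: sub => -[U FU Up].
by have [] := pB U FU.
Qed.

Lemma chain_cover (X : topologicalType) (Fam : set (set X)) (W : set X) :
  compact [set: X] -> Fam !=set0 -> total_on Fam subset ->
  (forall U, Fam U -> open U) -> open W ->
  ~` (\bigcup_(U in Fam) U) `<=` W -> exists2 U, Fam U & ~` U `<=` W.
Proof.
move=> cpt ne tot; apply: dir_cover => // U1 U2 F1 F2.
have [s12|s21] := tot _ _ F1 F2.
  by exists U2 => // x [/s12|].
by exists U1 => // x [|/s21].
Qed.

Lemma shrink_pt (X : topologicalType) (O : set X) (x : X) :
  hausdorff_space X -> compact [set: X] -> open O -> O x ->
  exists W, open W /\ W x /\ closure W `<=` O.
Proof.
move=> hT cpt oO Ox.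
have reg := @compact_regular X x setT hT cpt filterT.
have : nbhs x O by apply: open_nbhs_nbhs.
move=> /reg [N Nx clNO].
exists (interior N); split; first exact: open_interior.
split; first exact: Nx.
by apply: subset_trans clNO; apply: closureS; apply: interior_subset.
Qed.
Section Alg.
Variable G : zmodType.

Lemma sum_sel (T : finType) k (L : seq T) (g : seq T -> G) :
  \sum_(w : k.-tuple T) (if val w == L then g (val w) else 0) =
  if size L == k then g L else 0.
Proof.
case: eqP => sz.
  have w0 : size L == k by apply/eqP.
  rewrite (bigD1 (Tuple w0)) //= eqxx big1 ?addr0 // => w ne.
  case: eqP => // E; exfalso; move/eqP: ne; apply; apply: val_inj.
  by rewrite /= E.
rewrite big1 // => w _; case: eqP => // E; exfalso; apply: sz.
by rewrite -E size_tuple.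
Qed.

Lemma bdB m d (a b : chain G m d.+1) : bd (a - b) = bd a - bd b.
Proof.
apply/ffunP => t; rewrite !ffunE -sumrB; apply: eq_bigr => s _.
rewrite -sumrB; apply: eq_bigr => j _; rewrite !ffunE.
by case: ifP => _; [case: ifP => _; rewrite ?opprD ?opprK|rewrite subr0].
Qed.

Lemma pushB m' m (p : 'I_m' -> 'I_m) d (a b : chain G m' d) :
  push p (a - b) = push p a - push p b.
Proof.
apply/ffunP => t; rewrite !ffunE -sumrB; apply: eq_bigr => s _.
by rewrite !ffunE.
Qed.

Definition sgn (j : nat) (x : G) := if odd j then - x else x.

Lemma push_bd m' m (p : 'I_m' -> 'I_m) d (c : chain G m' d.+1) :
  push p (bd c) = bd (push p c).
Proof.
apply/ffunP => t; rewrite !ffunE.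
transitivity (\sum_(u : d.+2.-tuple 'I_m') \sum_(j < d.+2)
   (if map p (take j (val u) ++ drop j.+1 (val u)) == val t
    then sgn j (c u) else 0)).
  rewrite big_mkcond /=.
  under eq_bigr => w _ do rewrite ffunE.
  transitivity (\sum_(w : d.+1.-tuple 'I_m') \sum_(u : d.+2.-tuple 'I_m')
    \sum_(j < d.+2) (if val w == take j (val u) ++ drop j.+1 (val u) then
       (if map p (val w) == val t then sgn j (c u) else 0) else 0)).
    apply: eq_bigr => w _; case: ifP => wt.
      apply: eq_bigr => u _; apply: eq_bigr => j _.
      by rewrite (eq_sym (val w)); case: ifP.
    by rewrite big1 // => u _; rewrite big1 // => j _; case: ifP.
  rewrite exchange_big; apply: eq_bigr => u _.
  rewrite exchange_big; apply: eq_bigr => j _.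
  case: j => j /= jlt.
  rewrite (@sum_sel _ _ _ (fun L => if map p L == val t then sgn j (c u) else 0)).
  rewrite size_cat size_take size_drop size_tuple jlt.
  have -> : (j + (d.+2 - j.+1) = d.+1)%N by rewrite subSS addnBA // ?addKn -?ltnS.
  by rewrite eqxx.
symmetry.
transitivity (\sum_(s : d.+2.-tuple 'I_m) \sum_(j < d.+2)
   \sum_(u : d.+2.-tuple 'I_m')
   (if val s == map p (val u) then
     (if take j (val s) ++ drop j.+1 (val s) == val t then sgn j (c u) else 0)
    else 0)).
  apply: eq_bigr => s _; apply: eq_bigr => j _; rewrite ffunE.
  under [X in _ = X]eq_bigr => u _ do rewrite eq_sym.
  case: ifP => _.
    rewrite /sgn; case: (odd j); last first.
      by rewrite big_mkcond /=.
    rewrite big_mkcond /= -sumrN; apply: eq_bigr => u _.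
    by case: ifP => _; rewrite ?oppr0.
  by rewrite big1 // => u _; case: ifP.
under eq_bigr => s _ do rewrite exchange_big.
rewrite exchange_big; apply: eq_bigr => u _.
rewrite exchange_big; apply: eq_bigr => j _.
rewrite (@sum_sel _ _ _ (fun L => if take j L ++ drop j.+1 L == val t then sgn j (c u) else 0)) size_map size_tuple eqxx.
by rewrite -map_take -map_drop map_cat.
Qed.

End Alg.

Lemma cont (X : topologicalType) (G : zmodType) d (F : set X)
  (gamma : cech_fam X G d) (Fam : set (set X)) :
  hausdorff_space X -> compact [set: X] -> cech_elt F gamma ->
  Fam !=set0 -> total_on Fam subset ->
  (forall U, Fam U -> open U /\ F `<=` ~` U /\ cech_zero (~` U) gamma) ->
  cech_zero (~` \bigcup_(U in Fam) U) gamma.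
Proof.
move=> hT cpt [gsup gcomp] neF tot HF.
set K := ~` _.
move=> m O [oO KO].
have FK : F `<=` K.
  move=> x Fx [U FU Ux]; have [_ [FU' _]] := HF U FU.
  exact: (FU' x Fx).
have sh : forall y : {x | K x}, exists q : 'I_m * set X,
   open q.2 /\ q.2 (sval y) /\ closure q.2 `<=` O q.1.
  move=> [x Kx] /=; have [i _ Oix] := KO x Kx.
  have [W [oW [Wx cW]]] := shrink_pt _ _ _ hT cpt (oO i) Oix.
  by exists (i, W).
have [f Hf] := choice sh.
pose Fam' := [set U : set X | exists k (h : 'I_k -> {x | K x}),
   U = \bigcup_(j in setT) (f (h j)).2].
have [U0 FU0 KU0] : exists2 U, Fam' U & ~` U `<=` \bigcup_(U in Fam) U.
  apply: dir_cover => //.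
  - have e0 : 'I_0 -> {x | K x} by move=> [j]; rewrite ltn0.
    by exists (\bigcup_(j in setT) (f (e0 j)).2), 0%N, e0.
  - move=> U1 U2 [k1 [h1 ->]] [k2 [h2 ->]].
    pose hc (j : 'I_(k1 + k2)) :=
      match split j with inl a => h1 a | inr b => h2 b end.
    exists (\bigcup_(j in setT) (f (hc j)).2); first by exists (k1 + k2)%N, hc.
    move=> x [[a _ ax]|[b _ bx]].
      by exists (unsplit (inl a)) => //; rewrite /hc unsplitK.
    by exists (unsplit (inr b)) => //; rewrite /hc unsplitK.
  - move=> U [k [h ->]]; apply: bigcup_open => j _; exact: (Hf (h j)).1.
  - by apply: bigcup_open => U FU; have [] := HF U FU.
  - move=> x nx; apply: contrapT => nK.
    have Kx : K x by [].
    apply: nx; exists (\bigcup_(j in setT) (f ((fun _ : 'I_1 => exist _ x Kx) j)).2).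
      by exists 1%N, (fun _ => exist _ x Kx).
    by exists ord0 => //=; have [_ [] ] := Hf (exist _ x Kx).
have [k [h U0E]] := FU0.
have KU0' : K `<=` U0.
  move=> x Kx; apply: contrapT => nx; exact: Kx (KU0 x nx).
pose V (j : 'I_k) := (f (h j)).2.
pose p (j : 'I_k) := (f (h j)).1.
have oV : forall j, open (V j) by move=> j; exact: (Hf (h j)).1.
have cV : forall j, closure (V j) `<=` O (p j) by move=> j; exact: (Hf (h j)).2.2.
have KV : K `<=` \bigcup_(j in setT) V j by rewrite -U0E.
pose Z := ~` (\bigcup_(j in setT) V j) `|`
  \bigcup_(t in [set t : (d.+2).-tuple 'I_k |
      ~ ((K `&` \bigcap_(j in [set j | j \in val t]) closure (V j)) !=set0)])
   (\bigcap_(j in [set j | j \in val t]) closure (V j)).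
have cZ : closed Z.
  apply: closedU.
    by apply: open_closedC; apply: bigcup_open => j _.
  apply: closed_bigcup; first exact: finite_finset.
  by move=> t _; apply: closed_bigI => j _; exact: closed_closure.
have KW : K `<=` ~` Z.
  move=> x Kx [nV|[t bt ct]]; first exact: nV (KV x Kx).
  by apply: bt; exists x.
have [U FU UW] := @chain_cover _ _ _ cpt neF tot (fun U FU => (HF U FU).1)
  (closed_openC cZ) KW.
have [oU [FU' zU]] := HF U FU.
have covU : is_cover (~` U) V.
  split => // x /UW nZ; apply: contrapT => nV; apply: nZ; by left.
have [b2 [sb2 Eb2]] := zU k V covU.
have covFO : is_cover F O by split => // x /FK /KO.
have covFV : is_cover F V by split => // x /FK /KV.
have ref : refines F V O p.
  by move=> j x [Vx _]; apply: cV; apply: subset_closure.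
have [b1 [sb1 Eb1]] := gcomp m O k V p covFO covFV ref.
exists (push p b2 - b1); split; last first.
  by rewrite bdB -push_bd Eb2 Eb1 subKr.
move=> t nt; rewrite !ffunE.
have -> : b1 t = 0.
  apply: sb1 => -[x [Fx cx]]; apply: nt; exists x; split => //; exact: FK.
rewrite subr0 big1 // => s /eqP mst.
case: (pselect (nerve (~` U) V (val s))) => [[x [nUx capx]]|nn]; last first.
  exact: sb2.
exfalso.
case: (pselect ((K `&` \bigcap_(j in [set j | j \in val s]) closure (V j)) !=set0))
  => [[y [Ky cy]]|nb].
  apply: nt; exists y; split => // i /= it.
  rewrite -mst in it; move/mapP: it => [j js ->].
  by apply: cV; apply: cy.
apply: (UW x nUx); right; exists s => //.
by move=> j js; apply: subset_closure; apply: capx.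
Qed.

Theorem corollary2p7 (X : topologicalType) (G : zmodType) (n : nat) :
  hausdorff_space X -> compact [set: X] ->
  in_H X G n ->
  exists (F K : set X) (gamma : cech_fam X G n.-1),
    closed F /\ closed K /\ F `<=` K /\
    cech_elt F gamma /\ ~ cech_zero F gamma /\
    homology_membrane F K gamma.
Proof.
move=> hT cpt [_ [F [gamma [cF [eg [nz [_ zT]]]]]]].
pose P := [set U : set X | open U /\ F `<=` ~` U /\ cech_zero (~` U) gamma].
have [A [PA maxA]] : exists A, P A /\ forall B, A `<` B -> ~ P B.
  apply: Zorn_bigcup => Fm sFm tFm.
  case: (pselect (Fm !=set0)) => [ne|ne].
    split; first by apply: bigcup_open => U /sFm [].
    split; first by move=> x Fx [U /sFm [_ [FU _]] Ux]; exact: FU x Fx Ux.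
    by apply: (@cont _ _ _ F gamma) => // U /sFm.
  have E : \bigcup_(U in Fm) U = set0.
    by apply/seteqP; split => x // [U FU _]; exfalso; apply: ne; exists U.
  by rewrite /P /= E setC0; split; [exact: open0|split].
have [oA [FA zA]] := PA.
exists F, (~` A), gamma.
have cK : closed (~` A) by exact: open_closedC.
do 5!split => //.
split => //; split => //; split => //; split; first by split.
move=> K' cK' FK' sK' neK [_ zK'].
apply: (maxA (~` K')).
  split.
    by move=> x Ax K'x; exact: sK' x K'x Ax.
  move=> sub; apply: neK; apply/seteqP; split => // x Kx.
  by apply: contrapT => nK'x; exact: Kx (sub x nK'x).
split; first exact: closed_openC.
by rewrite setCK.
Qed.
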